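(* Let $u(t) = \frac{t-1}{t\log t}$ for $t>0$, $t\neq1$, $u(1)=1$, and consider on $\mathbb C^\ast = \mathbb C\setminus\{0\}$ the conformal metric $g(z,X) = \big(1 + |z|^2 u^2(|z|^2)\big)|X|^2$. Let $\kappa(z)$ denote its Gaussian curvature at $z$. Then $\kappa(z) \le 0$ for all $z \in \mathbb C^\ast$, $\kappa(z) \to -4$ as $z \to 0$, and $\kappa(z) \to 0$ as $|z| \to \infty$.
   Context: For a conformal metric $h(z)|dz|^2$ on a planar domain, the Gaussian curvature is $-2h^{-1}\,\partial^2\log h/\partial z\partial\overline z$. *)

(* Defs.v *)
From Stdlib Require Import Reals.
From Coquelicot Require Import Coquelicot.
Open Scope R_scope.

Definition u (t : R) : R := if Req_EM_T t 1 then 1 else (t - 1) / (t * ln t).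

(* A point z = x + i y of C is represented by (x, y); |z|^2 = x^2 + y^2. *)
Definition abs2 (x y : R) : R := x ^ 2 + y ^ 2.

(* Conformal factor h of g(z,X) = h(z)|X|^2, h(z) = 1 + |z|^2 u(|z|^2)^2. *)
Definition h (x y : R) : R := 1 + abs2 x y * (u (abs2 x y)) ^ 2.

Definition dxx (f : R -> R -> R) (x y : R) : R :=
  Derive (fun s => Derive (fun t => f t y) s) x.
Definition dyy (f : R -> R -> R) (x y : R) : R :=
  Derive (fun s => Derive (fun t => f x t) s) y.

(* For a real C^2 function f, d^2 f / dz dzbar = (1/4)(f_xx + f_yy). *)
Definition ddbar (f : R -> R -> R) (x y : R) : R := / 4 * (dxx f x y + dyy f x y).

(* Gaussian curvature of the conformal metric h |dz|^2:
   kappa = -2 h^{-1} d^2 log h / dz dzbar. *)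
Definition curvature (hh : R -> R -> R) (x y : R) : R :=
  - 2 * / hh x y * ddbar (fun a b => ln (hh a b)) x y.

Definition kappa (x y : R) : R := curvature h x y.

(* Main.v *)
Require Import Defs.
From Stdlib Require Import Reals Lra Lia Factorial.
From Coquelicot Require Import Coquelicot.
Open Scope R_scope.

Definition bc (n : nat) : R :=
  ((1/2) ^ (S n) - (-(1/2)) ^ (S n)) / INR (Factorial.fact (S n)).

Lemma bc_bound n : Rabs (bc n) <= / INR (Factorial.fact n).
Proof.
  unfold bc.
  assert (Hf : 0 < INR (Factorial.fact n)) by (apply lt_0_INR; apply lt_O_fact).
  assert (Hf1 : INR (Factorial.fact n) <= INR (Factorial.fact (S n))).
  { apply le_INR. simpl. lia. }
  assert (Hp : Rabs ((1/2) ^ (S n) - (-(1/2)) ^ (S n)) <= 1).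
  { eapply Rle_trans. apply Rabs_triang.
    rewrite Rabs_Ropp, <- !RPow_abs.
    replace (Rabs (-(1/2))) with (1/2) by (rewrite Rabs_Ropp, Rabs_pos_eq; lra).
    rewrite Rabs_pos_eq by lra.
    simpl. assert (0 <= (1/2)^n <= 1).
    { split. apply pow_le; lra. pose proof (pow_incr (1/2) 1 n) as Hq. rewrite pow1 in Hq. apply Hq; lra. }
    lra. }
  unfold Rdiv. rewrite Rabs_mult, Rabs_inv.
  rewrite (Rabs_pos_eq (INR _)) by lra.
  apply Rle_trans with (1 * / INR (Factorial.fact (S n))).
  apply Rmult_le_compat_r. left; apply Rinv_0_lt_compat; lra. exact Hp.
  rewrite Rmult_1_l. apply Rinv_le_contravar; lra.
Qed.

Lemma bc_radius : CV_radius bc = p_infty.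
Proof.
  assert (Hd : forall r, CV_disk bc r).
  { intro r. unfold CV_disk.
    apply (@ex_series_le R_AbsRing R_CompleteNormedModule _ (fun n => / INR (Factorial.fact n) * Rabs r ^ n)).
    - intro n. change norm with Rabs. rewrite Rabs_Rabsolu, Rabs_mult, <- RPow_abs.
      apply Rmult_le_compat_r. apply pow_le, Rabs_pos. apply bc_bound.
    - eexists. apply is_pseries_R. apply is_exp_Reals. }
  unfold CV_radius. apply is_lub_Rbar_unique. split.
  - intros x _. simpl. exact I.
  - intros l Hl. destruct l as [l| |].
    + exfalso. specialize (Hl (l+1) (Hd _)). simpl in Hl. lra.
    + simpl. exact I.
    + specialize (Hl 0 (Hd _)). simpl in Hl. contradiction.
Qed.


Definition S0 := PSeries bc.
Definition S1 := PSeries (PS_derive bc).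
Definition S2 := PSeries (PS_derive (PS_derive bc)).

Lemma S0_deriv x : is_derive S0 x (S1 x).
Proof. apply is_derive_PSeries. rewrite bc_radius. exact I. Qed.
Lemma S1_deriv x : is_derive S1 x (S2 x).
Proof. apply is_derive_PSeries. rewrite CV_radius_derive, bc_radius. exact I. Qed.

Lemma S0_0 : S0 0 = 1.
Proof. unfold S0. rewrite PSeries_0. unfold bc. simpl. field. Qed.
Lemma S1_0 : S1 0 = 0.
Proof. unfold S1. rewrite PSeries_0. unfold PS_derive, bc. simpl. field. Qed.
Lemma S2_0 : S2 0 = 1/12.
Proof. unfold S2. rewrite PSeries_0. unfold PS_derive, bc. simpl. field. Qed.

Definition cc (n : nat) : R := ((1/2) ^ n - (-(1/2)) ^ n) / INR (Factorial.fact n).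

Lemma S0_expl x : x <> 0 -> S0 x = (exp (x/2) - exp (-x/2)) / x.
Proof.
  intro Hx.
  assert (H : is_pseries cc x (exp (x/2) - exp (-x/2))).
  { apply is_pseries_R.
    pose proof (proj1 (is_pseries_R _ _ _) (is_exp_Reals (x/2))) as H1.
    pose proof (proj1 (is_pseries_R _ _ _) (is_exp_Reals (-x/2))) as H2.
    pose proof (is_series_minus _ _ _ _ H1 H2) as H3.
    eapply is_series_ext; [|exact H3].
    intro n. unfold minus, plus, opp; simpl. unfold cc.
    replace (x/2) with (1/2 * x) by field. replace (-x/2) with (-(1/2) * x) by field.
    rewrite !Rpow_mult_distr. field. apply INR_fact_neq_0. }
  assert (H' := is_pseries_decr_1 cc x (/ x) _ (Rinv_l x Hx) H).
  unfold S0. change bc with (PS_decr_1 cc). rewrite (is_pseries_unique _ _ _ H').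
  unfold cc; simpl. unfold scal, plus, opp; simpl. unfold mult; simpl. field. auto.
Qed.

Lemma locally_neq0 x : x <> 0 -> locally x (fun t => t <> 0).
Proof.
  intro Hx. assert (Hp : 0 < Rabs x) by (apply Rabs_pos_lt; auto).
  exists (mkposreal _ Hp). intros y Hy. change (Rabs (y - x) < Rabs x) in Hy.
  intro H0. subst y. rewrite Rminus_0_l, Rabs_Ropp in Hy. lra.
Qed.

Lemma S1_expl x : x <> 0 ->
  S1 x = (exp (x/2) + exp (-x/2)) / (2 * x) - (exp (x/2) - exp (-x/2)) / x ^ 2.
Proof.
  intro Hx.
  assert (Hd : is_derive (fun t => (exp (t/2) - exp (-t/2)) / t) x
     ((exp (x/2) + exp (-x/2)) / (2 * x) - (exp (x/2) - exp (-x/2)) / x ^ 2)).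
  { auto_derive. auto. unfold Rdiv. field. auto. }
  assert (Hd' : is_derive S0 x
     ((exp (x/2) + exp (-x/2)) / (2 * x) - (exp (x/2) - exp (-x/2)) / x ^ 2)).
  { eapply is_derive_ext_loc; [|exact Hd].
    eapply filter_imp; [|apply (locally_neq0 x Hx)].
    intros t Ht. symmetry. apply S0_expl; auto. }
  eapply is_derive_unique in Hd'. pose proof (is_derive_unique _ _ _ (S0_deriv x)).
  congruence.
Qed.

Lemma S2_expl x : x <> 0 ->
  S2 x = (exp (x/2) - exp (-x/2)) / (4 * x) - (exp (x/2) + exp (-x/2)) / x ^ 2
         + 2 * (exp (x/2) - exp (-x/2)) / x ^ 3.
Proof.
  intro Hx.
  assert (Hd : is_derive (fun t => (exp (t/2) + exp (-t/2)) / (2 * t) - (exp (t/2) - exp (-t/2)) / t ^ 2) x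
     ((exp (x/2) - exp (-x/2)) / (4 * x) - (exp (x/2) + exp (-x/2)) / x ^ 2
         + 2 * (exp (x/2) - exp (-x/2)) / x ^ 3)).
  { auto_derive. repeat split; auto; apply Rmult_integral_contrapositive; split; auto; try lra; try (apply Rmult_integral_contrapositive; split; auto; lra). unfold Rdiv. field. auto. }
  assert (Hd' : is_derive S1 x
     ((exp (x/2) - exp (-x/2)) / (4 * x) - (exp (x/2) + exp (-x/2)) / x ^ 2
         + 2 * (exp (x/2) - exp (-x/2)) / x ^ 3)).
  { eapply is_derive_ext_loc; [|exact Hd].
    eapply filter_imp; [|apply (locally_neq0 x Hx)].
    intros t Ht. symmetry. apply S1_expl; auto. }
  eapply is_derive_unique in Hd'. pose proof (is_derive_unique _ _ _ (S1_deriv x)).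
  congruence.
Qed.

Lemma exp_sum_ge2 c : exp c + exp (- c) - 2 >= 0.
Proof.
  pose proof (exp_pos c). pose proof (exp_pos (-c)).
  assert (exp c * exp (-c) = 1) by (rewrite <- exp_plus; replace (c + - c) with 0 by ring; apply exp_0).
  assert (0 <= (exp c - exp (-c))^2) by apply pow2_ge_0. nra.
Qed.

Lemma sinh_ineq v : (exp v - exp (- v)) * v >= 2 * v ^ 2.
Proof.
  destruct (MVT_gen (fun t => exp t - exp (- t) - 2 * t) 0 v
              (fun t => exp t + exp (- t) - 2)) as [c [_ Hc]].
  - intros t _. auto_derive. auto. ring.
  - intros t _. apply continuity_pt_filterlim, (ex_derive_continuous (fun t => exp t - exp (- t) - 2 * t)).
    auto_derive. auto.
  - rewrite Ropp_0, exp_0 in Hc.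
    pose proof (exp_sum_ge2 c).
    assert ((exp v - exp (- v) - 2 * v) * v = (exp c + exp (- c) - 2) * v ^ 2) by
      (replace (exp v - exp (- v) - 2 * v) with (exp v - exp (- v) - 2 * v - (1 - 1 - 2 * 0)) by ring;
       rewrite Hc; ring).
    assert (0 <= v ^ 2) by (apply pow2_ge_0).
    nra.
Qed.

Lemma D_nonneg x : S0 x * S2 x - S1 x ^ 2 >= 0.
Proof.
  destruct (Req_dec x 0) as [H0|Hx].
  - subst. rewrite S0_0, S1_0, S2_0. lra.
  - rewrite S0_expl, S1_expl, S2_expl by auto.
    pose proof (sinh_ineq (x/2)) as Hs.
    replace (- (x/2)) with (-x/2) in Hs by field.
    set (P := exp (x/2)) in *. set (Q := exp (-x/2)) in *.
    assert (HPQ : P * Q = 1) by (unfold P, Q; rewrite <- exp_plus; replace (x/2 + -x/2) with 0 by field; apply exp_0).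
    assert (Hx2 : 0 < x ^ 2) by (apply pow2_gt_0; auto).
    assert (HA : (P - Q) * x >= x ^ 2) by nra.
    assert (HA2 : (P - Q) ^ 2 >= x ^ 2).
    { assert (((P - Q) * x) ^ 2 >= (x ^ 2) ^ 2) by nra.
      assert ((P-Q)^2 * x^2 >= x^2 * x^2) by nra. nra. }
    replace ((P - Q) / x * ((P - Q) / (4 * x) - (P + Q) / x ^ 2 + 2 * (P - Q) / x ^ 3) -
      ((P + Q) / (2 * x) - (P - Q) / x ^ 2) ^ 2) with (((P - Q) ^ 2 - x ^ 2) / x ^ 4).
    + assert (H4 : 0 < x ^ 4) by (replace (x^4) with ((x^2)^2) by ring; apply pow_lt; auto).
      apply Rle_ge. unfold Rdiv. apply Rmult_le_pos; [lra | left; apply Rinv_0_lt_compat; auto].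
    + assert (HP : P <> 0) by (unfold P; apply Rgt_not_eq, exp_pos).
      assert (HQ : Q = / P) by (apply (Rmult_eq_reg_l P); [rewrite HPQ; field|]; auto).
      rewrite HQ. field. auto.
Qed.


Lemma ln_neq0 t : 0 < t -> t <> 1 -> ln t <> 0.
Proof.
  intros Ht Ht1 H. apply Ht1. rewrite <- (exp_ln t Ht), H. apply exp_0.
Qed.

Lemma tu2 t : 0 < t -> t * u t ^ 2 = S0 (ln t) ^ 2.
Proof.
  intro Ht. unfold u. destruct (Req_EM_T t 1) as [H1|H1].
  - subst. rewrite ln_1, S0_0. ring.
  - pose proof (ln_neq0 t Ht H1) as HL.
    rewrite S0_expl by auto.
    set (L := ln t) in *.
    assert (HPt : exp (L/2) ^ 2 = t).
    { simpl. rewrite Rmult_1_r, <- exp_plus. replace (L/2 + L/2) with L by field.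
      unfold L. apply exp_ln; auto. }
    replace (exp (-L/2)) with (/ exp (L/2)) by (rewrite <- exp_Ropp; f_equal; field).
    set (P := exp (L/2)) in *.
    assert (HP : P <> 0) by (unfold P; apply Rgt_not_eq, exp_pos).
    rewrite <- HPt. field. split; auto.
Qed.

Lemma h_S x y : 0 < abs2 x y -> h x y = 1 + S0 (ln (abs2 x y)) ^ 2.
Proof. intro H. unfold h. rewrite tu2; auto. Qed.

Lemma locally_pos x c : 0 <= c -> 0 < x ^ 2 + c -> locally x (fun t => 0 < t ^ 2 + c).
Proof.
  intros Hc Hr. destruct (Req_dec c 0) as [H0|H0].
  - subst c. assert (Hx : x <> 0) by (intro; subst; simpl in Hr; lra).
    eapply filter_imp; [|apply (locally_neq0 x Hx)].
    intros t Ht. rewrite Rplus_0_r. apply pow2_gt_0; auto.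
  - apply filter_forall. intro t. pose proof (pow2_ge_0 t). lra.
Qed.

Lemma comp_ln (F : R -> R) (dF c s : R) :
  0 < s ^ 2 + c -> is_derive F (ln (s ^ 2 + c)) dF ->
  is_derive (fun t => F (ln (t ^ 2 + c))) s (dF * (2 * s / (s ^ 2 + c))).
Proof.
  intros Hs HF.
  assert (Hg : is_derive (fun t => ln (t ^ 2 + c)) s (2 * s / (s ^ 2 + c))).
  { auto_derive. auto. field. lra. }
  pose proof (is_derive_comp F (fun t => ln (t ^ 2 + c)) s _ _ HF Hg) as H.
  replace (dF * (2 * s / (s ^ 2 + c))) with (scal (2 * s / (s ^ 2 + c)) dF).
  exact H. unfold scal; simpl; unfold mult; simpl. ring.
Qed.

Lemma radial_d2 (f f1 f2 : R -> R) (Hf : forall s, is_derive f s (f1 s))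
  (Hf1 : forall s, is_derive f1 s (f2 s)) (g : R -> R) (c x : R) :
  0 <= c -> 0 < x ^ 2 + c ->
  (forall t, 0 < t ^ 2 + c -> g t = f (ln (t ^ 2 + c))) ->
  Derive (fun s => Derive g s) x =
    f2 (ln (x ^ 2 + c)) * (2 * x / (x ^ 2 + c)) ^ 2
    + f1 (ln (x ^ 2 + c)) * (2 / (x ^ 2 + c) - 4 * x ^ 2 / (x ^ 2 + c) ^ 2).
Proof.
  intros Hc Hr Hg.
  assert (Hin : forall s, 0 < s ^ 2 + c -> Derive g s = f1 (ln (s ^ 2 + c)) * (2 * s / (s ^ 2 + c))).
  { intros s Hs. apply is_derive_unique.
    eapply is_derive_ext_loc.
    { eapply filter_imp; [|apply (locally_pos s c Hc Hs)].
      intros t Ht. symmetry. apply Hg. exact Ht. }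
    apply comp_ln; auto. }
  rewrite (Derive_ext_loc _ (fun s => f1 (ln (s ^ 2 + c)) * (2 * s / (s ^ 2 + c)))).
  2:{ eapply filter_imp; [|apply (locally_pos x c Hc Hr)]. intros t Ht. apply Hin. exact Ht. }
  assert (Hd1 : is_derive (fun s => f1 (ln (s ^ 2 + c))) x (f2 (ln (x ^ 2 + c)) * (2 * x / (x ^ 2 + c)))).
  { apply comp_ln; auto. }
  assert (Hd2 : is_derive (fun s => 2 * s / (s ^ 2 + c)) x (2 / (x ^ 2 + c) - 4 * x ^ 2 / (x ^ 2 + c) ^ 2)).
  { auto_derive. lra. field. lra. }
  pose proof (is_derive_mult _ _ _ _ _ Hd1 Hd2 (fun n m => Rmult_comm n m)) as H.
  pose proof (H : is_derive (fun s : R => f1 (ln (s ^ 2 + c)) * (2 * s / (s ^ 2 + c))) x _) as H'.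
  etransitivity; [apply is_derive_unique; exact H'|].
  unfold plus, mult; simpl. field. lra.
Qed.

Definition F0 s := ln (1 + S0 s ^ 2).
Definition F1 s := 2 * S0 s * S1 s / (1 + S0 s ^ 2).
Definition F2 s := (2 * (S1 s ^ 2 + S0 s * S2 s) * (1 + S0 s ^ 2) - 4 * S0 s ^ 2 * S1 s ^ 2) / (1 + S0 s ^ 2) ^ 2.

Lemma pos1 s : 0 < 1 + S0 s ^ 2.
Proof. pose proof (pow2_ge_0 (S0 s)). lra. Qed.

Lemma DS0 s : Derive (fun x => S0 x) s = S1 s.
Proof. apply is_derive_unique. exact (S0_deriv s). Qed.
Lemma DS1 s : Derive (fun x => S1 x) s = S2 s.
Proof. apply is_derive_unique. exact (S1_deriv s). Qed.

Lemma F0_deriv s : is_derive F0 s (F1 s).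
Proof.
  unfold F0, F1. pose proof (pos1 s).
  auto_derive.
  - split. exists (S1 s). apply S0_deriv. split; [lra|auto].
  - rewrite DS0. field. lra.
Qed.

Lemma F1_deriv s : is_derive F1 s (F2 s).
Proof.
  unfold F1, F2. pose proof (pos1 s).
  auto_derive.
  - split. exists (S1 s). apply S0_deriv. split. exists (S2 s). apply S1_deriv.
    split. exists (S1 s). apply S0_deriv. split; [lra|auto].
  - rewrite DS0, DS1. field. lra.
Qed.

Lemma abs2_pos x y : (x, y) <> (0, 0) -> 0 < abs2 x y.
Proof.
  intro H. unfold abs2.
  destruct (Req_dec x 0) as [Hx|Hx].
  - subst. assert (y <> 0) by (intro; subst; auto).
    pose proof (pow2_gt_0 y H0). simpl. simpl in H1. lra.
  - pose proof (pow2_gt_0 x Hx). pose proof (pow2_ge_0 y). lra.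
Qed.

Lemma kappa_formula x y : (x, y) <> (0, 0) ->
  kappa x y = -2 * F2 (ln (abs2 x y)) / (abs2 x y * (1 + S0 (ln (abs2 x y)) ^ 2)).
Proof.
  intro Hxy. pose proof (abs2_pos x y Hxy) as Hr.
  unfold kappa, curvature, ddbar, dxx, dyy.
  rewrite h_S by auto.
  rewrite (radial_d2 F0 F1 F2 F0_deriv F1_deriv (fun t => ln (h t y)) (y ^ 2) x).
  2: apply pow2_ge_0. 2: exact Hr.
  2:{ intros t Ht. rewrite h_S by exact Ht. reflexivity. }
  rewrite (radial_d2 F0 F1 F2 F0_deriv F1_deriv (fun t => ln (h x t)) (x ^ 2) y).
  2: apply pow2_ge_0. 2: (unfold abs2 in Hr; lra).
  2:{ intros t Ht. rewrite h_S. unfold abs2. rewrite (Rplus_comm (x^2) (t^2)). reflexivity. unfold abs2; lra. }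
  unfold abs2 in *. rewrite (Rplus_comm (y^2) (x^2)).
  pose proof (pos1 (ln (x ^ 2 + y ^ 2))).
  field. lra.
Qed.


Lemma F2_nonneg s : 0 <= F2 s.
Proof.
  unfold F2. pose proof (pos1 s). pose proof (D_nonneg s).
  set (A := S0 s) in *. set (B := S1 s) in *. set (C := S2 s) in *.
  replace (2 * (B ^ 2 + A * C) * (1 + A ^ 2) - 4 * A ^ 2 * B ^ 2)
    with (2 * ((A * C - B ^ 2) * (1 + A ^ 2) + 2 * B ^ 2)) by ring.
  apply Rmult_le_pos.
  - apply Rmult_le_pos. lra. pose proof (pow2_ge_0 B). nra.
  - left. apply Rinv_0_lt_compat. apply pow_lt. lra.
Qed.

Lemma part1 x y : (x, y) <> (0, 0) -> kappa x y <= 0.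
Proof.
  intro H. rewrite kappa_formula by auto. pose proof (abs2_pos x y H).
  pose proof (F2_nonneg (ln (abs2 x y))). pose proof (pos1 (ln (abs2 x y))).
  set (X := abs2 x y) in *. set (Y := 1 + S0 (ln X) ^ 2) in *. set (Z := F2 (ln X)) in *.
  replace (-2 * Z / (X * Y)) with (- (2 * (Z / (X * Y)))) by (field; lra).
  assert (0 <= Z / (X * Y)).
  { unfold Rdiv. apply Rmult_le_pos. lra. left. apply Rinv_0_lt_compat. apply Rmult_lt_0_compat; lra. }
  lra.
Qed.

Lemma kappa_expl x y : (x, y) <> (0, 0) -> abs2 x y <> 1 ->
  let s := ln (abs2 x y) in let P := exp (s / 2) in
  let a := P ^ 2 - 1 in let b := P ^ 2 + 1 in let m := P * s in
  kappa x y = -4 * ((a ^ 2 - m ^ 2) / (m ^ 2 + a ^ 2) ^ 2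
                    + (b * m - 2 * a * P) ^ 2 * s ^ 2 / (2 * (m ^ 2 + a ^ 2) ^ 3)).
Proof.
  intros H H1 s P a b m. rewrite kappa_formula by auto.
  pose proof (abs2_pos x y H) as Hr.
  assert (Hs : s <> 0) by (apply ln_neq0; auto).
  assert (HPr : P ^ 2 = abs2 x y).
  { unfold P. simpl. rewrite Rmult_1_r, <- exp_plus. replace (s/2 + s/2) with s by field.
      unfold s. apply exp_ln; auto. }
  assert (HP : P <> 0) by (unfold P; apply Rgt_not_eq, exp_pos).
  fold s. unfold F2. rewrite S0_expl, S1_expl, S2_expl by auto.
  replace (exp (-s/2)) with (/ P) by (unfold P; rewrite <- exp_Ropp; f_equal; field).
  fold P. rewrite <- HPr.
  assert (Ha : a <> 0) by (unfold a; rewrite HPr; lra).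
  assert (Hma : m ^ 2 + a ^ 2 <> 0).
  { pose proof (pow2_ge_0 m). pose proof (pow2_gt_0 a Ha). lra. }
  unfold a, b, m in *.
  field. auto.
Qed.


Lemma div_le n d c : 0 < d -> n <= c * d -> n / d <= c.
Proof.
  intros Hd H. unfold Rdiv. apply (Rmult_le_reg_r d); auto.
  rewrite Rmult_assoc, Rinv_l by lra. lra.
Qed.

Lemma le_div n d c : 0 < d -> c * d <= n -> c <= n / d.
Proof.
  intros Hd H. unfold Rdiv. apply (Rmult_le_reg_r d); auto.
  rewrite Rmult_assoc, Rinv_l by lra. lra.
Qed.

Lemma large_bound P s : 2 <= P -> 0 <= s <= 2 * P ->
  let a := P ^ 2 - 1 in let b := P ^ 2 + 1 in let m := P * s in
  Rabs (-4 * ((a ^ 2 - m ^ 2) / (m ^ 2 + a ^ 2) ^ 2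
                    + (b * m - 2 * a * P) ^ 2 * s ^ 2 / (2 * (m ^ 2 + a ^ 2) ^ 3)))
  <= 1602 / P.
Proof.
  intros HP Hs a b m.
  set (Q := P ^ 2).
  assert (HQ : 4 <= Q) by (unfold Q; nra).
  assert (HQP : 2 * P <= Q) by (unfold Q; nra).
  assert (Ha : 3 <= a) by (unfold a; fold Q; lra).
  assert (Ha2 : Q ^ 2 / 2 <= a ^ 2) by (unfold a; fold Q; nra).
  assert (Hm : 0 <= m <= 2 * Q) by (unfold m, Q; split; nra).
  set (W := m ^ 2 + a ^ 2).
  assert (HW : a ^ 2 <= W) by (unfold W; nra).
  assert (HWp : 0 < W) by nra.
  assert (T1b : Rabs ((a ^ 2 - m ^ 2) / W ^ 2) <= 1 / (2 * Q)).
  { unfold Rdiv. rewrite Rabs_mult, Rabs_inv, (Rabs_pos_eq (W^2)) by nra.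
    apply div_le. nra.
    assert (Rabs (a ^ 2 - m ^ 2) <= W) by (apply Rabs_le; unfold W; nra).
    assert (1 * / (2 * Q) * W ^ 2 = W * (W / (2 * Q))) by (field; lra).
    rewrite H0. assert (1 <= W / (2 * Q)).
    { apply le_div. lra. nra. }
    nra. }
  assert (Hb : 0 <= b <= 2 * Q) by (unfold b; fold Q; lra).
  assert (Hbm : - (5 * Q ^ 2) <= b * m - 2 * a * P <= 5 * Q ^ 2).
  { assert (a <= Q) by (unfold a; fold Q; lra). split; nra. }
  assert (Hbm2 : (b * m - 2 * a * P) ^ 2 <= 25 * Q ^ 4) by nra.
  assert (Hs2 : s ^ 2 <= 4 * Q) by (unfold Q; nra).
  assert (HN : (b * m - 2 * a * P) ^ 2 * s ^ 2 <= 100 * Q ^ 5).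
  { replace (100 * Q ^ 5) with ((25 * Q ^ 4) * (4 * Q)) by ring.
    apply Rmult_le_compat; [apply pow2_ge_0|apply pow2_ge_0|exact Hbm2|exact Hs2]. }
  assert (HW3 : Q ^ 6 / 4 <= 2 * W ^ 3).
  { assert (Q ^ 2 / 2 <= W) by lra.
    assert ((Q ^ 2 / 2) ^ 3 <= W ^ 3) by (apply pow_incr; split; nra).
    nra. }
  assert (HW3p : 0 < W ^ 3) by (apply pow_lt; lra).
  assert (T2b : 0 <= (b * m - 2 * a * P) ^ 2 * s ^ 2 / (2 * W ^ 3) <= 400 / Q).
  { split. apply Rmult_le_pos. apply Rmult_le_pos; apply pow2_ge_0. left; apply Rinv_0_lt_compat; lra.
    apply div_le. lra.
    assert (400 / Q * (2 * W ^ 3) >= 400 / Q * (Q ^ 6 / 4)).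
    { apply Rle_ge, Rmult_le_compat_l. apply Rlt_le, Rdiv_lt_0_compat; lra. lra. }
    assert (400 / Q * (Q ^ 6 / 4) = 100 * Q ^ 5) by (field; lra). lra. }
  fold W.
  set (T1 := (a ^ 2 - m ^ 2) / W ^ 2) in *.
  set (T2 := (b * m - 2 * a * P) ^ 2 * s ^ 2 / (2 * W ^ 3)) in *.
  rewrite Rabs_mult. replace (Rabs (-4)) with 4 by (rewrite Rabs_left; lra).
  assert (Rabs (T1 + T2) <= 1 / (2 * Q) + 400 / Q).
  { eapply Rle_trans. apply Rabs_triang. rewrite (Rabs_pos_eq T2) by lra. lra. }
  assert (4 * (1 / (2 * Q) + 400 / Q) = 1602 / Q) by (field; lra).
  assert (1602 / Q <= 1602 / P).
  { apply Rmult_le_compat_l. lra. apply Rinv_le_contravar; lra. }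
  assert (0 <= Rabs (T1 + T2)) by apply Rabs_pos.
  nra.
Qed.

Lemma small_bound w s : 0 < w <= 1/64 -> s ^ 2 <= 64 / w ->
  let P := w ^ 2 in
  let a := P ^ 2 - 1 in let b := P ^ 2 + 1 in let m := P * s in
  Rabs (-4 * ((a ^ 2 - m ^ 2) / (m ^ 2 + a ^ 2) ^ 2
                    + (b * m - 2 * a * P) ^ 2 * s ^ 2 / (2 * (m ^ 2 + a ^ 2) ^ 3)) - -4)
  <= 600000 * w.
Proof.
  intros Hw Hs P a b m.
  assert (HP : 0 < P <= w / 64) by (unfold P; split; nra).
  assert (HP2 : P ^ 2 <= w / 4096) by (assert (P <= 1/4096) by nra; nra).
  assert (Ha : -1 <= a <= -3/4) by (unfold a; nra).
  assert (Ha2 : 1/2 <= a ^ 2 <= 1) by nra.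
  assert (H1a : 0 <= 1 - a ^ 2 <= 2 * P ^ 2) by (unfold a; nra).
  assert (Hs4 : s ^ 2 * w <= 64).
  { apply (Rmult_le_compat_r w) in Hs; [|lra]. unfold Rdiv in Hs.
    rewrite Rmult_assoc, Rinv_l in Hs by lra. lra. }
  assert (Hm2 : m ^ 2 <= 64 * w ^ 3).
  { unfold m, P. replace ((w ^ 2 * s) ^ 2) with (w ^ 3 * (s ^ 2 * w)) by ring.
    assert (0 < w ^ 3) by (apply pow_lt; lra). nra. }
  assert (Hw3 : 64 * w ^ 3 <= w / 64) by nra.
  assert (Hm2' : 0 <= m ^ 2 <= w / 64) by (split; [apply pow2_ge_0|lra]).
  set (W := m ^ 2 + a ^ 2).
  assert (HW : 1/2 <= W <= 2) by (unfold W; lra).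
  assert (HWW : 1/4 <= W ^ 2) by nra.
  assert (HW3 : 1/8 <= W ^ 3) by (assert (W ^ 3 = W * W ^ 2) by ring; nra).
  set (num1 := a ^ 2 - m ^ 2 - W ^ 2).
  assert (Hnum1 : num1 = a ^ 2 * (1 - a ^ 2) - m ^ 2 * (1 + 2 * a ^ 2 + m ^ 2))
    by (unfold num1, W; ring).
  assert (Hn1 : Rabs num1 <= 2 * P ^ 2 + 4 * m ^ 2).
  { rewrite Hnum1. apply Rabs_le. split; nra. }
  assert (T1b : Rabs ((a ^ 2 - m ^ 2) / W ^ 2 - 1) <= w).
  { replace ((a ^ 2 - m ^ 2) / W ^ 2 - 1) with (num1 / W ^ 2) by (unfold num1; field; lra).
    unfold Rdiv. rewrite Rabs_mult, Rabs_inv, (Rabs_pos_eq (W^2)) by nra.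
    apply div_le. lra.
    assert (w * W ^ 2 >= w / 4) by nra. lra. }
  assert (Hb : 1 <= b <= 2) by (unfold b; nra).
  assert (Hbm : (b * m - 2 * a * P) ^ 2 <= 8 * m ^ 2 + 8 * P ^ 2).
  { assert (0 <= (b * m + 2 * a * P) ^ 2) by apply pow2_ge_0.
    assert ((b * m) ^ 2 <= 4 * m ^ 2) by (rewrite Rpow_mult_distr; assert (b^2 <= 4) by nra;
       assert (0 <= m^2) by apply pow2_ge_0; nra).
    assert ((2 * a * P) ^ 2 <= 4 * P ^ 2) by (replace ((2*a*P)^2) with (4 * a^2 * P^2) by ring;
       assert (0 <= P^2) by apply pow2_ge_0; nra).
    nra. }
  assert (Hms : m ^ 2 * s ^ 2 <= 4096 * w ^ 2).
  { unfold m, P. replace ((w ^ 2 * s) ^ 2 * s ^ 2) with (w ^ 2 * (s ^ 2 * w) ^ 2) by ring.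
    assert (0 <= s ^ 2 * w) by (apply Rmult_le_pos; [apply pow2_ge_0|lra]).
    assert ((s ^ 2 * w) ^ 2 <= 64 ^ 2) by (apply pow_incr; lra).
    assert (0 <= w ^ 2) by apply pow2_ge_0. nra. }
  assert (HPs : P ^ 2 * s ^ 2 = m ^ 2) by (unfold m; ring).
  assert (HN2 : (b * m - 2 * a * P) ^ 2 * s ^ 2 <= 33280 * w).
  { assert ((b * m - 2 * a * P) ^ 2 * s ^ 2 <= (8 * m ^ 2 + 8 * P ^ 2) * s ^ 2).
    { apply Rmult_le_compat_r. apply pow2_ge_0. exact Hbm. }
    assert (w ^ 2 <= w) by nra. nra. }
  assert (T2b : 0 <= (b * m - 2 * a * P) ^ 2 * s ^ 2 / (2 * W ^ 3) <= 133120 * w).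
  { split. apply Rmult_le_pos. apply Rmult_le_pos; apply pow2_ge_0. left; apply Rinv_0_lt_compat; lra.
    apply div_le. lra. nra. }
  set (T1 := (a ^ 2 - m ^ 2) / W ^ 2) in *.
  set (T2 := (b * m - 2 * a * P) ^ 2 * s ^ 2 / (2 * W ^ 3)) in *.
  replace (-4 * (T1 + T2) - -4) with (-4 * ((T1 - 1) + T2)) by ring.
  rewrite Rabs_mult. replace (Rabs (-4)) with 4 by (rewrite Rabs_left; lra).
  assert (Rabs (T1 - 1 + T2) <= w + 133120 * w).
  { eapply Rle_trans. apply Rabs_triang. rewrite (Rabs_pos_eq T2) by lra. lra. }
  lra.
Qed.


Lemma Pe_props r : 0 < r ->
  0 < exp (ln r / 2) /\ exp (ln r / 2) ^ 2 = r /\ ln r = 2 * ln (exp (ln r / 2))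
  /\ exp (ln r / 2) = sqrt r.
Proof.
  intro Hr. assert (H2 : exp (ln r / 2) ^ 2 = r).
  { simpl. rewrite Rmult_1_r, <- exp_plus. replace (ln r/2 + ln r/2) with (ln r) by field.
    apply exp_ln; auto. }
  split; [apply exp_pos|]. split; [auto|]. split.
  - rewrite ln_exp. field.
  - rewrite <- H2 at 2. rewrite sqrt_pow2; auto. left; apply exp_pos.
Qed.

Lemma nonzero_of_pos x y : 0 < abs2 x y -> (x, y) <> (0, 0).
Proof. intros H E. inversion E. subst. unfold abs2 in H. simpl in H. lra. Qed.

Lemma ln_lt_self x : 0 < x -> ln x < x.
Proof.
  intro Hx. pose proof (exp_ineq1_le x).
  rewrite <- (ln_exp x) at 2. apply ln_increasing; lra.
Qed.

Lemma part3 eps : 0 < eps -> exists M : R,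
     forall x y : R, M < sqrt (abs2 x y) -> Rabs (kappa x y) < eps.
Proof.
  intro He. exists (2 + 1602 / eps). intros x y Hxy.
  assert (H0 : 0 <= 1602 / eps) by (apply Rlt_le, Rdiv_lt_0_compat; lra).
  assert (Hr0 : 0 <= abs2 x y) by (unfold abs2; pose proof (pow2_ge_0 x); pose proof (pow2_ge_0 y); lra).
  assert (Hsq : 2 < sqrt (abs2 x y)) by lra.
  assert (Hr : 4 < abs2 x y).
  { rewrite <- (sqrt_sqrt (abs2 x y)) by auto. nra. }
  assert (Hnz := nonzero_of_pos x y ltac:(lra)).
  pose proof (kappa_expl x y Hnz ltac:(lra)) as Hk. cbv zeta in Hk.
  destruct (Pe_props (abs2 x y)) as [HP [HP2 [Hs HPs]]]; [lra|].
  set (P := exp (ln (abs2 x y) / 2)) in *.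
  set (s := ln (abs2 x y)) in *.
  rewrite Hk.
  assert (HP1 : 2 < P) by (rewrite HPs; lra).
  assert (Hlp : 0 < ln P) by (rewrite <- ln_1; apply ln_increasing; lra).
  pose proof (ln_lt_self P ltac:(lra)).
  eapply Rle_lt_trans. apply (large_bound P s); lra.
  apply (Rmult_lt_reg_r P). lra. unfold Rdiv. rewrite Rmult_assoc, Rinv_l by lra.
  assert (1602 / eps < P) by (rewrite HPs; lra).
  apply (Rmult_lt_compat_l eps) in H1; auto. unfold Rdiv in H1.
  rewrite <- Rmult_assoc, (Rmult_comm eps), Rmult_assoc, Rinv_r in H1 by lra. lra.
Qed.

Lemma part2 eps : 0 < eps -> exists delta : R, 0 < delta /\
     forall x y : R, (x, y) <> (0, 0) -> sqrt (abs2 x y) < delta ->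
       Rabs (kappa x y - (-4)) < eps.
Proof.
  intro He. set (e := eps / 600000).
  assert (He' : 0 < e) by (unfold e; lra).
  exists (Rmin (1/4096) (e ^ 2)). split.
  { apply Rmin_pos. lra. apply pow_lt; lra. }
  intros x y Hnz Hsq.
  pose proof (abs2_pos x y Hnz) as Hr.
  destruct (Pe_props (abs2 x y)) as [HP [HP2 [Hs HPs]]]; [lra|].
  assert (Hd1 := Rmin_l (1/4096) (e ^ 2)). assert (Hd2 := Rmin_r (1/4096) (e ^ 2)).
  assert (Hr1 : abs2 x y <> 1).
  { intro E. rewrite E, sqrt_1 in Hsq. lra. }
  pose proof (kappa_expl x y Hnz Hr1) as Hk. cbv zeta in Hk.
  set (P := exp (ln (abs2 x y) / 2)) in *.
  set (s := ln (abs2 x y)) in *.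
  assert (HPlt : P < 1/4096) by (rewrite HPs; lra).
  assert (HPe : P < e ^ 2) by (rewrite HPs; lra).
  set (w := sqrt P).
  assert (Hw : 0 < w) by (apply sqrt_lt_R0; lra).
  assert (Hww : w ^ 2 = P) by (unfold w; simpl; rewrite Rmult_1_r; apply sqrt_sqrt; lra).
  set (q := sqrt w).
  assert (Hq : 0 < q) by (apply sqrt_lt_R0; lra).
  assert (Hqq : q ^ 2 = w) by (unfold q; simpl; rewrite Rmult_1_r; apply sqrt_sqrt; lra).
  assert (Hw64 : w <= 1/64) by nra.
  assert (Hwe : w < e) by nra.
  assert (Hq1 : q < 1) by nra.
  assert (HlnP : ln P = 4 * ln q).
  { rewrite <- Hww, <- Hqq. rewrite !ln_pow by (try apply pow_lt; lra). simpl INR. ring. }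
  assert (Hlq : ln q < 0) by (rewrite <- ln_1; apply ln_increasing; lra).
  assert (Hlq2 : - ln q < / q).
  { rewrite <- ln_Rinv by lra. apply ln_lt_self. apply Rinv_0_lt_compat; lra. }
  assert (Hs2 : s ^ 2 <= 64 / w).
  { rewrite Hs, HlnP, <- Hqq.
    replace ((2 * (4 * ln q)) ^ 2) with (64 * (- ln q) ^ 2) by ring.
    unfold Rdiv. apply Rmult_le_compat_l. lra.
    rewrite <- pow_inv. apply pow_incr. lra. }
  rewrite Hk. rewrite <- Hww.
  eapply Rle_lt_trans. apply (small_bound w s); lra.
  unfold e in Hwe. lra.
Qed.

Theorem mainTheorem3 :
  (forall x y : R, (x, y) <> (0, 0) -> kappa x y <= 0) /\
  (forall eps : R, 0 < eps -> exists delta : R, 0 < delta /\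
     forall x y : R, (x, y) <> (0, 0) -> sqrt (abs2 x y) < delta ->
       Rabs (kappa x y - (-4)) < eps) /\
  (forall eps : R, 0 < eps -> exists M : R,
     forall x y : R, M < sqrt (abs2 x y) -> Rabs (kappa x y) < eps).
Proof.
  split; [exact part1|split; [exact part2|exact part3]].
Qed.
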